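(* Let $G=G_+G_-$ be a unique factorization of a finite group $G$, let $\xi,\eta:G_+\to G_-$ be maps and $r:G_+\times G_+\to\mathbb R_{>0}$ a function such that \[ R=\sum_{u,v\in G_+} r(u,v)\,\{u(\eta(v)^{u})^{-1}\}\otimes\{v\,\xi(u)\} \] is a positive quasi-triangular structure on $H(G;G_+,G_-)$. Then $r(u,v)=1$ for all $u,v\in G_+$.
   Context: A unique factorization $G=G_+G_-$ consists of subgroups $G_+,G_-$ such that every $g\in G$ is uniquely $g=g_+g_-$ with $g_+\in G_+$, $g_-\in G_-$. For $u\in G_+$, $x\in G_-$ define ${}^u x\in G_-$, $u^x\in G_+$, ${}^x u\in G_+$, $x^u\in G_-$ by $ux=({}^u x)(u^x)$ and $xu=({}^x u)(x^u)$. $H(G;G_+,G_-)$ is the complex vector space with basis $\{g\}$, $g\in G$, and Hopf algebra structure: $\{g\}\{h\}=\delta_{g_+^{\,g_-},\,h_+}\{g h_-\}$; unit $1=\sum_{u\in G_+}\{u\}$; $\Delta\{g\}=\sum_{h\in G_+}\{g_+h^{-1}({}^{h}g_-)\}\otimes\{h g_-\}$; $\varepsilon\{g\}=\delta_{g_+,e}$; $S\{g\}=\{g^{-1}\}$. A quasi-triangular structure on a Hopf algebra $H$ is an invertible $R\in H\otimes H$ with $\tau\Delta(a)=R\Delta(a)R^{-1}$ for all $a$ ($\tau$ the flip), $(\Delta\otimes\mathrm{id})R=R_{13}R_{23}$, $(\mathrm{id}\otimes\Delta)R=R_{13}R_{12}$, and $(\varepsilon\otimes\mathrm{id})R=(\mathrm{id}\otimes\varepsilon)R=1$.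 An element of $H(G;G_+,G_-)^{\otimes 2}$ is positive if it is a linear combination of the $\{g\}\otimes\{h\}$ with non-negative real coefficients. *)

(* Defs.v *)
From HB Require Import structures.
From mathcomp Require Import all_boot all_order all_algebra all_fingroup.
Set Implicit Arguments. Unset Strict Implicit. Unset Printing Implicit Defensive.
Import Order.TTheory GRing.Theory Num.Theory.
Local Open Scope ring_scope.

(* The finite group G is the whole finGroupType gT; G_+ = Gp, G_- = Gm.
   Elements of H = H(G;G_+,G_-) are functions gT -> C (coefficients on the
   basis {g}); elements of H⊗H (resp. H⊗H⊗H) are functions on gT*gT
   (resp. gT*gT*gT). *)

Definition unique_factorization (gT : finGroupType) (Gp Gm : {group gT}) : Prop :=
  forall g : gT, exists! p : gT * gT,
    [/\ p.1 \in Gp, p.2 \in Gm & g = (p.1 * p.2)%g].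

Section Hopf.
Variables (gT : finGroupType) (C : numClosedFieldType) (Gp Gm : {group gT}).

Definition fact (g : gT) : gT * gT :=
  odflt (1, 1)%g [pick p : gT * gT | (p.1 \in Gp) && (p.2 \in Gm) && ((p.1 * p.2)%g == g)].
Definition pl (g : gT) : gT := (fact g).1.
Definition mi (g : gT) : gT := (fact g).2.

(* u x = (^u x)(u^x), with ^u x in G_-, u^x in G_+  (u in G_+, x in G_-) *)
Definition lact_m (u x : gT) : gT := ((mi ((u * x)^-1)%g)^-1)%g.
Definition ract_p (u x : gT) : gT := ((pl ((u * x)^-1)%g)^-1)%g.
(* x u = (^x u)(x^u), with ^x u in G_+, x^u in G_-  (x in G_-, u in G_+) *)
Definition lact_p (x u : gT) : gT := pl (x * u)%g.
Definition ract_m (x u : gT) : gT := mi (x * u)%g.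

Definition bas (g : gT) : gT -> C := fun k => (k == g)%:R.

(* structure constants: {g}{h} = delta_{g_+^{g_-}, h_+} {g h_-} *)
Definition mulc (g h k : gT) : C :=
  ((ract_p (pl g) (mi g) == pl h) && ((g * mi h)%g == k))%:R.

Definition Hmul (a b : gT -> C) : gT -> C :=
  fun k => \sum_(g : gT) \sum_(h : gT) a g * b h * mulc g h k.
Definition Hone : gT -> C := fun k => (k \in Gp)%:R.
Definition Hcomul (a : gT -> C) : gT * gT -> C :=
  fun p => \sum_(g : gT) a g *
     \sum_(h in Gp) ((p.1 == (pl g * h^-1 * lact_m h (mi g))%g)
                     && (p.2 == (h * mi g)%g))%:R.
Definition Hcounit (a : gT -> C) : C := \sum_(g : gT) a g * (pl g == 1%g)%:R.

Definition H2mul (X Y : gT * gT -> C) : gT * gT -> C :=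
  fun p => \sum_(q : gT * gT) \sum_(q' : gT * gT)
             X q * Y q' * mulc q.1 q'.1 p.1 * mulc q.2 q'.2 p.2.
Definition H2one : gT * gT -> C := fun p => Hone p.1 * Hone p.2.
Definition flip (X : gT * gT -> C) : gT * gT -> C := fun p => X (p.2, p.1).

(* H⊗H⊗H, triples written ((x, y), z) *)
Definition H3mul (X Y : gT * gT * gT -> C) : gT * gT * gT -> C :=
  fun p => \sum_(q : gT * gT * gT) \sum_(q' : gT * gT * gT)
             X q * Y q' * mulc q.1.1 q'.1.1 p.1.1 * mulc q.1.2 q'.1.2 p.1.2
               * mulc q.2 q'.2 p.2.
Definition leg12 (X : gT * gT -> C) : gT * gT * gT -> C :=
  fun p => X p.1 * Hone p.2.
Definition leg13 (X : gT * gT -> C) : gT * gT * gT -> C :=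
  fun p => X (p.1.1, p.2) * Hone p.1.2.
Definition leg23 (X : gT * gT -> C) : gT * gT * gT -> C :=
  fun p => Hone p.1.1 * X (p.1.2, p.2).
Definition comul_id (X : gT * gT -> C) : gT * gT * gT -> C :=
  fun p => \sum_(g : gT) X (g, p.2) * Hcomul (bas g) p.1.
Definition id_comul (X : gT * gT -> C) : gT * gT * gT -> C :=
  fun p => \sum_(h : gT) X (p.1.1, h) * Hcomul (bas h) (p.1.2, p.2).
Definition counit_id (X : gT * gT -> C) : gT -> C :=
  fun k => \sum_(g : gT) X (g, k) * Hcounit (bas g).
Definition id_counit (X : gT * gT -> C) : gT -> C :=
  fun k => \sum_(h : gT) X (k, h) * Hcounit (bas h).

Definition quasi_triangular (R : gT * gT -> C) : Prop :=
  [/\ exists Ri : gT * gT -> C, H2mul R Ri = H2one /\ H2mul Ri R = H2one,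
      forall (Ri : gT * gT -> C), H2mul R Ri = H2one -> H2mul Ri R = H2one ->
        forall a : gT -> C, flip (Hcomul a) = H2mul (H2mul R (Hcomul a)) Ri,
      comul_id R = H3mul (leg13 R) (leg23 R),
      id_comul R = H3mul (leg13 R) (leg12 R)
    & counit_id R = Hone /\ id_counit R = Hone].

Definition positive2 (R : gT * gT -> C) : Prop := forall p, 0 <= R p.

Definition Rform (xi eta : gT -> gT) (r : gT -> gT -> C) : gT * gT -> C :=
  fun p => \sum_(u in Gp) \sum_(v in Gp)
     r u v * ((p.1 == (u * (ract_m (eta v) u)^-1)%g)
              && (p.2 == (v * xi u)%g))%:R.

End Hopf.

(* Main.v *)
Require Import Defs.
From mathcomp Require Import all_boot all_order all_algebra all_fingroup.
Import Order.TTheory GRing.Theory Num.Theory.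
Local Open Scope ring_scope.
Set Implicit Arguments. Unset Strict Implicit. Unset Printing Implicit Defensive.

Section Fact.
Variables (gT : finGroupType) (Gp Gm : {group gT}).
Hypothesis uf : unique_factorization Gp Gm.

Lemma fact_spec g : [/\ pl Gp Gm g \in Gp, mi Gp Gm g \in Gm & (pl Gp Gm g * mi Gp Gm g)%g = g].
Proof.
rewrite /pl /mi /fact.
case: pickP => [p /= /andP[/andP[h1 h2] /eqP h3] | H] /=; first by [].
have [p [[h1 h2 h3] _]] := uf g.
by move: (H p); rewrite h1 h2 -h3 eqxx.
Qed.

Lemma plP g : pl Gp Gm g \in Gp. Proof. by case: (fact_spec g). Qed.
Lemma miP g : mi Gp Gm g \in Gm. Proof. by case: (fact_spec g). Qed.
Lemma plmi g : (pl Gp Gm g * mi Gp Gm g)%g = g. Proof. by case: (fact_spec g). Qed.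

Lemma fact_uniq a b : a \in Gp -> b \in Gm -> pl Gp Gm (a * b)%g = a /\ mi Gp Gm (a * b)%g = b.
Proof.
move=> ha hb.
have [p [_ U]] := uf (a * b)%g.
have E1 := U (a, b) (And3 ha hb erefl).
have E2 := U (pl Gp Gm (a*b)%g, mi Gp Gm (a*b)%g) (And3 (plP _) (miP _) (esym (plmi _))).
by rewrite E1 in E2; case: E2 => <- <-.
Qed.

Lemma pl_eq a b : a \in Gp -> b \in Gm -> pl Gp Gm (a * b)%g = a.
Proof. by move=> ha hb; case: (fact_uniq ha hb). Qed.
Lemma mi_eq a b : a \in Gp -> b \in Gm -> mi Gp Gm (a * b)%g = b.
Proof. by move=> ha hb; case: (fact_uniq ha hb). Qed.

Lemma pl_p a : a \in Gp -> pl Gp Gm a = a.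
Proof. by move=> ha; rewrite -[in LHS](mulg1 a) pl_eq. Qed.
Lemma mi_p a : a \in Gp -> mi Gp Gm a = 1%g.
Proof. by move=> ha; rewrite -[in LHS](mulg1 a) mi_eq. Qed.

Lemma triv a : a \in Gp -> a \in Gm -> a = 1%g.
Proof. by move=> ha hb; have := mi_eq (group1 Gp) hb; rewrite mul1g mi_p. Qed.

Lemma ract_m_in x u : ract_m Gp Gm x u \in Gm. Proof. exact: miP. Qed.
Lemma lact_m_in x u : lact_m Gp Gm x u \in Gm. Proof. by rewrite /lact_m groupV miP. Qed.
Lemma ract_p_in x u : ract_p Gp Gm x u \in Gp. Proof. by rewrite /ract_p groupV plP. Qed.

Lemma ract_p_p a : a \in Gp -> ract_p Gp Gm a 1 = a.
Proof. by move=> ha; rewrite /ract_p mulg1 pl_p ?invgK ?groupV. Qed.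

End Fact.

Lemma sum1_in (C : numClosedFieldType) (I : finType) (A : pred I) x0 (F : I -> C) :
  x0 \in A -> (forall x, x \in A -> x != x0 -> F x = 0) -> \sum_(x in A) F x = F x0.
Proof. by move=> hx H; rewrite (bigD1 x0) //= big1 ?addr0 // => x /andP[]; exact: H. Qed.

Lemma sum1 (C : numClosedFieldType) (I : finType) x0 (F : I -> C) :
  (forall x, x != x0 -> F x = 0) -> \sum_x F x = F x0.
Proof. by move=> H; rewrite (bigD1 x0) //= big1 ?addr0. Qed.

Lemma bnat1 (C : numClosedFieldType) (b : bool) : (b%:R : C) != 0 -> b.
Proof. by case: b => //; rewrite eqxx. Qed.

Section Main.
Variables (gT : finGroupType) (C : numClosedFieldType) (Gp Gm : {group gT}).
Variables (xi eta : gT -> gT) (r : gT -> gT -> C).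
Hypothesis uf : unique_factorization Gp Gm.
Hypothesis xiP : {in Gp, forall u, xi u \in Gm}.
Hypothesis etaP : {in Gp, forall u, eta u \in Gm}.

Local Notation pl := (pl Gp Gm).
Local Notation mi := (mi Gp Gm).
Local Notation R := (Rform Gp Gm xi eta r).
Definition a u v := (u * (ract_m Gp Gm (eta v) u)^-1)%g.

Lemma pl_a u v : u \in Gp -> pl (a u v) = u.
Proof. by move=> hu; rewrite /a pl_eq // groupV ract_m_in. Qed.
Lemma mi_a u v : u \in Gp -> mi (a u v) = ((ract_m Gp Gm (eta v) u)^-1)%g.
Proof. by move=> hu; rewrite /a mi_eq // groupV ract_m_in. Qed.

Lemma Rsupp p : R p != 0 ->
  exists u v, [/\ u \in Gp, v \in Gp, p.1 = a u v & p.2 = (v * xi u)%g].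
Proof.
move=> H.
case: (boolP [exists u in Gp, exists v in Gp, (p.1 == a u v) && (p.2 == (v * xi u)%g)]).
  move=> /exists_inP[u hu /exists_inP[v hv /andP[/eqP e1 /eqP e2]]].
  by exists u, v.
move=> /exists_inP N; case/negP: H; apply/eqP; rewrite /Rform big1 // => u hu.
rewrite big1 // => v hv.
case E: (_ && _); last by rewrite mulr0.
by case: N; exists u => //; apply/exists_inP; exists v.
Qed.

Lemma Rval u v : u \in Gp -> v \in Gp -> R (a u v, (v * xi u)%g) = r u v.
Proof.
move=> hu hv; rewrite /Rform (sum1_in (x0 := u)) // => [|u' hu' nu].
  rewrite (sum1_in (x0 := v)) // => [|v' hv' nv]; first by rewrite !eqxx mulr1.
  case E: (_ && _); last by rewrite mulr0.
  move/andP: E => [_ /eqP /= E]; case/negP: nv.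
  by have := pl_eq uf hv (xiP hu); rewrite E pl_eq // ?xiP // => ->.
rewrite big1 // => v' hv'.
case E: (_ && _); last by rewrite mulr0.
move/andP: E => [/eqP /= E _]; case/negP: nu.
by have := pl_a v hu; rewrite E -/(a u' v') pl_a // => ->.
Qed.


Lemma hcomul_pt g0 h g : h \in Gp ->
  Hcomul Gp Gm (bas C g) ((pl g0 * h^-1 * lact_m Gp Gm h (mi g0))%g, (h * mi g0)%g)
  = (g == g0)%:R.
Proof.
move=> hh; rewrite /Hcomul (sum1 (x0 := g)) => [|g' ng]; last first.
  by rewrite /bas (negbTE ng) mul0r.
rewrite /bas eqxx mul1r (sum1_in (x0 := h)) // => [|h' hh' nh].
  rewrite /=; case: (g =P g0) => [-> | ne]; first by rewrite !eqxx.
  case E: (_ && _) => //; exfalso; move/andP: E => [/eqP e1 /eqP e2].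
  have e3 := mulgI _ _ _ e2; rewrite -e3 in e1.
  have e4 := mulIg _ _ _ (mulIg _ _ _ e1).
  by apply: ne; rewrite -(plmi uf g) -(plmi uf g0) e3 e4.
case E: (_ && _) => //; move/andP: E => [_ /eqP /= e2].
have := pl_eq uf hh (miP uf g0); rewrite e2 pl_eq //; last exact: miP.
by move=> e; rewrite e eqxx in nh.
Qed.


Hypothesis rpos : {in Gp &, forall u v, 0 < r u v}.

Lemma pl_X g0 h : h \in Gp -> pl (pl g0 * h^-1 * lact_m Gp Gm h (mi g0))%g = (pl g0 * h^-1)%g.
Proof. by move=> hh; rewrite pl_eq // ?lact_m_in // groupM ?groupV // plP. Qed.

Lemma pl_Y g0 h : h \in Gp -> pl (h * mi g0)%g = h.
Proof. by move=> hh; rewrite pl_eq // miP. Qed.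

Lemma star_analysis w h v q q' : w \in Gp -> h \in Gp -> v \in Gp ->
  let g0 := a (w * h) v in
  let X := (pl g0 * h^-1 * lact_m Gp Gm h (mi g0))%g in
  let Y := (h * mi g0)%g in
  let Z := (v * xi (w * h))%g in
  let f := ract_p Gp Gm v (xi w) in
  leg13 Gp R q * leg23 Gp R q' * mulc C Gp Gm q.1.1 q'.1.1 X
    * mulc C Gp Gm q.1.2 q'.1.2 Y * mulc C Gp Gm q.2 q'.2 Z != 0 ->
  q = ((a w v, h), (v * xi w)%g) /\
  q' = ((ract_p Gp Gm (pl (a w v)) (mi (a w v)), a h f), (f * xi h)%g).
Proof.
move=> hw hh hv g0 X Y Z f.
case: q => [[q11 q12] q2]; case: q' => [[s11 s12] s2] /=.
rewrite /leg13 /leg23 /= !mulf_eq0 !negb_or.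
move=> /andP[/andP[/andP[/andP[/andP[hA hB] /andP[hC hD]] hE] hF] hG].
have [u1 [v1 [hu1 hv1 /= e11 e2]]] := Rsupp hA.
have [u2 [v2 [hu2 hv2 /= e12 e2']]] := Rsupp hD.
have {hB} hB := bnat1 hB. have {hC} hC := bnat1 hC.
move/bnat1: hE => /andP[/eqP hE1 /eqP hE2].
move/bnat1: hF => /andP[/eqP hF1 /eqP hF2].
move/bnat1: hG => /andP[/eqP hG1 /eqP hG2].
rewrite (mi_p uf hC) mulg1 in hE2.
rewrite (pl_p uf hC) in hE1.
rewrite (pl_p uf hB) (mi_p uf hB) ract_p_p // e12 pl_a // in hF1.
have q12h : q12 = h.
  by have := congr1 pl hF2; rewrite pl_eq // ?miP // pl_Y.
have u1w : u1 = w.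
  have := congr1 pl hE2; rewrite e11 pl_a // pl_X // /g0 pl_a ?groupM //.
  by rewrite mulgK.
have ev : pl q2 = v1 /\ mi q2 = xi u1 by rewrite e2 pl_eq ?mi_eq ?xiP.
have ev' : pl s2 = v2 /\ mi s2 = xi u2 by rewrite e2' pl_eq ?mi_eq ?xiP.
case: ev => ev1 ev2; case: ev' => ev1' ev2'.
rewrite ev1 ev2 ev1' in hG1.
have v1v : v1 = v.
  have := congr1 pl hG2; rewrite e2 ev2' -mulgA pl_eq ?groupM ?xiP //.
  by rewrite /Z pl_eq ?xiP ?groupM.
subst u1 q12 u2.
by rewrite -hE1 e11 e12 e2 e2' -hG1 v1v.
Qed.


Lemma bnat_1 (b : bool) : (b%:R : C) != 0 -> b%:R = 1 :> C.
Proof. by case: b => //; rewrite eqxx. Qed.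

Lemma star w h v : w \in Gp -> h \in Gp -> v \in Gp ->
  comul_id Gp Gm R = H3mul Gp Gm (leg13 Gp R) (leg23 Gp R) ->
  r (w * h)%g v = r w v * r h (ract_p Gp Gm v (xi w)).
Proof.
move=> hw hh hv Hc.
have hwh : (w * h)%g \in Gp by rewrite groupM.
pose p := (((pl (a (w * h) v) * h^-1 * lact_m Gp Gm h (mi (a (w * h) v)))%g,
            (h * mi (a (w * h) v))%g), (v * xi (w * h))%g).
have E : comul_id Gp Gm R p = H3mul Gp Gm (leg13 Gp R) (leg23 Gp R) p by rewrite Hc.
have L : comul_id Gp Gm R p = r (w * h)%g v.
  rewrite /comul_id /p /= (sum1 (x0 := a (w * h) v)) => [|g ng].
    by rewrite hcomul_pt // eqxx mulr1 Rval.
  by rewrite hcomul_pt // (negbTE ng) mulr0.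
pose f := ract_p Gp Gm v (xi w).
pose q0 := ((a w v, h), (v * xi w)%g).
pose q0' := ((ract_p Gp Gm (pl (a w v)) (mi (a w v)), a h f), (f * xi h)%g).
rewrite /H3mul (sum1 (x0 := q0)) in E; last first.
  move=> q nq; rewrite big1 // => q' _.
  apply/eqP; rewrite -[_ == 0]negbK; apply/negP => H; case/negP: nq.
  by have [-> _] := star_analysis hw hh hv H.
rewrite (sum1 (x0 := q0')) in E; last first.
  move=> q' nq'.
  apply/eqP; rewrite -[_ == 0]negbK; apply/negP => H; case/negP: nq'.
  by have [_ ->] := star_analysis hw hh hv H.
rewrite L in E.
have Hn := lt0r_neq0 (rpos hwh hv); rewrite E in Hn.
move: Hn E; rewrite /leg13 /leg23 /= /mulc /Hone !mulf_eq0 !negb_or.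
move=> /andP[/andP[/andP[/andP[/andP[hA hB] /andP[hC hD]] hE] hF] hG].
rewrite (bnat_1 hB) (bnat_1 hC) (bnat_1 hE) (bnat_1 hF) (bnat_1 hG) !Rval //.
  by rewrite !mulr1 mul1r.
exact: ract_p_in.
Qed.


Definition gg u h := ract_p Gp Gm (pl (a u h)) (mi (a u h)).

Lemma star2_analysis u h k q q' : u \in Gp -> h \in Gp -> k \in Gp ->
  let g0 := a u (k * h) in
  let k0 := ((k * h) * xi u)%g in
  let Y := (pl k0 * h^-1 * lact_m Gp Gm h (mi k0))%g in
  let Z := (h * mi k0)%g in
  leg13 Gp R q * leg12 Gp R q' * mulc C Gp Gm q.1.1 q'.1.1 g0
    * mulc C Gp Gm q.1.2 q'.1.2 Y * mulc C Gp Gm q.2 q'.2 Z != 0 ->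
  q = ((a u h, k), (h * xi u)%g) /\
  q' = ((a (gg u h) k, (k * xi (gg u h))%g),
        ract_p Gp Gm (pl (h * xi u)%g) (mi (h * xi u)%g)).
Proof.
move=> hu hh hk g0 k0 Y Z.
have hkh : (k * h)%g \in Gp by rewrite groupM.
case: q => [[q11 q12] q2]; case: q' => [[s11 s12] s2] /=.
rewrite /leg13 /leg12 /= !mulf_eq0 !negb_or.
move=> /andP[/andP[/andP[/andP[/andP[hA hB] /andP[hC hD]] hE] hF] hG].
have [u1 [v1 [hu1 hv1 /= e11 e2]]] := Rsupp hA.
have [u2 [v2 [hu2 hv2 /= e12 e2']]] := Rsupp hC.
have {hB} hB := bnat1 hB. have {hD} hD := bnat1 hD.
move/bnat1: hE => /andP[/eqP hE1 /eqP hE2].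
move/bnat1: hF => /andP[/eqP hF1 /eqP hF2].
move/bnat1: hG => /andP[/eqP hG1 /eqP hG2].
rewrite (mi_p uf hD) mulg1 in hG2.
rewrite (pl_p uf hD) in hG1.
rewrite (pl_p uf hB) (mi_p uf hB) ract_p_p // e2' in hF1.
rewrite pl_eq ?xiP // in hF1.
have u1u : u1 = u.
  have := congr1 pl hE2; rewrite e11 /a -mulgA pl_eq //; last first.
    by rewrite groupM ?groupV ?ract_m_in ?miP.
  by rewrite /g0 pl_a.
have mk0 : mi k0 = xi u by rewrite /k0 mi_eq ?xiP.
have q12k : q12 = k.
  have := congr1 pl hF2; rewrite pl_eq // ?miP // /Y pl_X // /k0 pl_eq ?xiP //.
  by rewrite mulgK.
have v1h : v1 = h.
  have := congr1 pl hG2; rewrite e2 /Z mk0 pl_eq ?xiP // pl_eq ?xiP //.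
rewrite e11 pl_a // in hE1.
subst u1 q12 v1 v2.
rewrite e11 e2 e12 e2' -hG1 hG2 /Z mk0.
have -> : u2 = gg u h by rewrite /gg pl_a // hE1 e12 pl_a.
done.
Qed.

Lemma star2 u h k : u \in Gp -> h \in Gp -> k \in Gp ->
  id_comul Gp Gm R = H3mul Gp Gm (leg13 Gp R) (leg12 Gp R) ->
  r u (k * h)%g = r u h * r (gg u h) k.
Proof.
move=> hu hh hk Hc.
have hkh : (k * h)%g \in Gp by rewrite groupM.
pose k0 := ((k * h) * xi u)%g.
pose p := ((a u (k * h), (pl k0 * h^-1 * lact_m Gp Gm h (mi k0))%g), (h * mi k0)%g).
have E : id_comul Gp Gm R p = H3mul Gp Gm (leg13 Gp R) (leg12 Gp R) p by rewrite Hc.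
have L : id_comul Gp Gm R p = r u (k * h)%g.
  rewrite /id_comul /p /= (sum1 (x0 := k0)) => [|g ng].
    by rewrite hcomul_pt // eqxx mulr1 Rval.
  by rewrite hcomul_pt // (negbTE ng) mulr0.
pose q0 := ((a u h, k), (h * xi u)%g).
pose q0' := ((a (gg u h) k, (k * xi (gg u h))%g),
        ract_p Gp Gm (pl (h * xi u)%g) (mi (h * xi u)%g)).
rewrite /H3mul (sum1 (x0 := q0)) in E; last first.
  move=> q nq; rewrite big1 // => q' _.
  apply/eqP; rewrite -[_ == 0]negbK; apply/negP => H; case/negP: nq.
  by have [-> _] := star2_analysis hu hh hk H.
rewrite (sum1 (x0 := q0')) in E; last first.
  move=> q' nq'.
  apply/eqP; rewrite -[_ == 0]negbK; apply/negP => H; case/negP: nq'.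
  by have [_ ->] := star2_analysis hu hh hk H.
rewrite L in E.
have Hn := lt0r_neq0 (rpos hu hkh); rewrite E in Hn.
move: Hn E; rewrite /leg13 /leg12 /= /mulc /Hone !mulf_eq0 !negb_or.
move=> /andP[/andP[/andP[/andP[/andP[hA hB] /andP[hC hD]] hE] hF] hG].
rewrite (bnat_1 hB) (bnat_1 hD) (bnat_1 hE) (bnat_1 hF) (bnat_1 hG) !Rval //.
  by rewrite !mulr1.
exact: ract_p_in.
Qed.


Lemma gg_eq u h : u \in Gp -> h \in Gp -> gg u h = pl (eta h * u)%g.
Proof.
move=> hu hh; rewrite /gg /ract_p plmi // /a /ract_m invMg invgK.
have H : mi (eta h * u)%g = ((pl (eta h * u)%g)^-1 * (eta h * u))%g.
  by rewrite -{3}(plmi uf (eta h * u)%g) mulKg.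
rewrite H mulgA mulgK pl_eq ?invgK // ?groupV ?plP ?etaP //.
Qed.

Lemma gg_inj h : h \in Gp -> {in Gp &, injective (gg^~ h)}.
Proof.
move=> hh u1 u2 h1 h2 /=; rewrite !gg_eq // => Heq.
set e := eta h.
have e1 := plmi uf (e * u1)%g; have e2 := plmi uf (e * u2)%g.
rewrite Heq in e1.
have X : (u1^-1 * u2)%g = ((mi (e * u1)%g)^-1 * mi (e * u2)%g)%g.
  apply: (mulgI (e * u1)%g).
  rewrite -(mulgA e u1) mulKVg -{1}e1 -mulgA mulKVg e2 //.
have : (u1^-1 * u2)%g = 1%g.
  apply: (triv uf); first by rewrite groupM ?groupV.
  by rewrite X groupM ?groupV ?miP.
by move/eqP; rewrite -eq_mulVg1 => /eqP.
Qed.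

Lemma prod_reindex (s : gT -> gT) (F : gT -> C) :
  {in Gp, forall x, s x \in Gp} -> {in Gp &, injective s} ->
  \prod_(x in Gp) F (s x) = \prod_(x in Gp) F x.
Proof.
move=> sP sI; rewrite -(big_imset _ sI).
have H : [set s x | x in Gp] = Gp.
  apply/eqP; rewrite eqEcard card_in_imset // leqnn andbT.
  by apply/subsetP => y /imsetP [x hx ->]; exact: sP.
by apply: eq_bigl => x; rewrite H.
Qed.

Definition P v := \prod_(h in Gp) r h v.

Lemma P_pos v : v \in Gp -> 0 < P v.
Proof. by move=> hv; apply: prodr_gt0 => h hh; exact: rpos. Qed.

Hypothesis H3 : comul_id Gp Gm R = H3mul Gp Gm (leg13 Gp R) (leg23 Gp R).
Hypothesis H4 : id_comul Gp Gm R = H3mul Gp Gm (leg13 Gp R) (leg12 Gp R).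

Lemma P_mul k h : k \in Gp -> h \in Gp -> P (k * h)%g = P h * P k.
Proof.
move=> hk hh; rewrite /P.
rewrite (eq_bigr (fun u => r u h * r (gg u h) k)) => [|u hu]; last exact: star2.
rewrite big_split /=; congr (_ * _).
apply: (prod_reindex (fun u => r u k) (s := gg^~ h)); last exact: gg_inj.
by move=> x hx; exact: ract_p_in.
Qed.

Lemma P1 : P 1%g = 1.
Proof.
have := P_mul (group1 Gp) (group1 Gp); rewrite mulg1 => E.
have hn := lt0r_neq0 (P_pos (group1 Gp)).
by apply: (mulfI hn); rewrite mulr1 -E.
Qed.

Lemma P_eq1 k : k \in Gp -> P k = 1.
Proof.
move=> hk.
have Hx n : P (k ^+ n)%g = P k ^+ n.
  elim: n => [|n IH]; first by rewrite expg0 P1 expr0.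
  by rewrite expgS P_mul ?groupX // IH exprSr.
have := Hx #[k]%g; rewrite expg_order P1 => /esym/eqP.
by rewrite pexpr_eq1 ?order_gt0 ?ltW ?P_pos // => /eqP.
Qed.

Lemma r_eq1 w v : w \in Gp -> v \in Gp -> r w v = 1.
Proof.
move=> hw hv.
have E : \prod_(h in Gp) r (w * h)%g v = P v.
  apply: (prod_reindex (fun h => r h v) (s := mulg w)).
    by move=> x hx; rewrite groupM.
  by move=> x y _ _; exact: mulgI.
rewrite (eq_bigr (fun h => r w v * r h (ract_p Gp Gm v (xi w)))) in E; last first.
  by move=> h hh; exact: star.
rewrite big_split /= prodr_const -/(P _) !P_eq1 ?ract_p_in // mulr1 in E.
move/eqP: E; rewrite pexpr_eq1 ?cardG_gt0 // => [/eqP //|].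
exact: ltW (rpos hw hv).
Qed.

End Main.

Unset Implicit Arguments.
Theorem proposition5 (gT : finGroupType) (C : numClosedFieldType)
    (Gp Gm : {group gT}) (xi eta : gT -> gT) (r : gT -> gT -> C) :
  unique_factorization Gp Gm ->
  {in Gp, forall u, xi u \in Gm} ->
  {in Gp, forall u, eta u \in Gm} ->
  {in Gp &, forall u v, 0 < r u v} ->
  quasi_triangular Gp Gm (Rform Gp Gm xi eta r) ->
  positive2 (Rform Gp Gm xi eta r) ->
  {in Gp &, forall u v, r u v = 1}.
Proof.
move=> uf xiP etaP rpos [_ _ H3 H4 _] _ u v hu hv.
exact: (r_eq1 uf xiP etaP rpos H3 H4).
Qed.
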